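(* Let $r\ge2$, $\gamma=(\gamma_1,\dots,\gamma_r)$ with $\gamma_i\in(0,1)$, $\sum_i\gamma_i=1$, $p=d/n^{r-1}$, $c_\gamma=\frac{1}{r^{r-1}(r-1)\prod_i\gamma_i}$, $f=\left(\frac{c_\gamma\log d}{d}\right)^{1/(r-1)}$, and $m=\left(\frac{d}{(\log d)^r}\right)^{1/(r-1)}$ (assumed a positive integer dividing $n$). Let $k=(1-\rho)rnf$ with $\rho>0$ sufficiently small (and with $\gamma_ik$ integers). Then for $d$ sufficiently large and $n$ sufficiently large, \[ \mathbb{P}[Z_k>0]\ge\exp\left(-\frac{50n\sqrt{r(c_\gamma\log d)^{1/(r-1)}}}{d^{\frac{1-\rho/4}{r-1}}}\right), \] where $Z_k$ is the number of $\gamma$-balanced $P$-independent sets of size $k$ in $H\sim\mathcal{H}(r,n,p)$.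
   Context: $\mathcal{H}(r,n,p)$: random $r$-uniform $r$-partite hypergraph with vertex set $[n]\times[r]$, parts $V_i=[n]\times\{i\}=\{1_i,\dots,n_i\}$, each $e\in V_1\times\cdots\times V_r$ an edge independently with probability $p$. An independent set contains no edge; it is $\gamma$-balanced if $|I\cap V_i|=\gamma_i|I|$ for all $i$. With $n'=n/m$, the blocks are $P_{i,j}=\{((j-1)m+1)_i,\dots,(jm)_i\}$ for $i\in[r]$, $j\in[n']$; a $\gamma$-balanced $P$-independent set is a $\gamma$-balanced independent set $I$ with $|I\cap P_{i,j}|\le1$ for all $i,j$. *)

(* Defs.v *)
From HB Require Import structures.
From mathcomp Require Import all_boot all_order all_algebra.
From mathcomp Require Import boolp reals sequences exp.
Set Implicit Arguments. Unset Strict Implicit. Unset Printing Implicit Defensive.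
Import Order.TTheory GRing.Theory Num.Theory.
Local Open Scope ring_scope.

(* Vertices of H(r,n,p): pairs (x, i) with x : 'I_n (x = 0 stands for vertex 1)
   and i : 'I_r (the part).  Part V_i = [n] x {i}. *)
Definition vertex (n r : nat) := ('I_n * 'I_r)%type.

(* An edge e in V_1 x ... x V_r is given by the choice e i : 'I_n in each part i;
   it is the vertex set {(e i, i) | i}. *)
Definition edge (n r : nat) := {ffun 'I_r -> 'I_n}.

Definition hgraph (n r : nat) := {set edge n r}.

Definition independent n r (H : hgraph n r) (I : {set vertex n r}) : Prop :=
  forall e, e \in H -> ~ (forall i : 'I_r, (e i, i) \in I).

Definition balanced (R : realType) n r (gamma : 'I_r -> R) (I : {set vertex n r}) : Prop :=
  forall i : 'I_r, (#|[set v in I | v.2 == i]|%:R : R) = gamma i * (#|I|%:R).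

(* Block P_{i,j} (0-indexed j < n/m): vertices of part i whose index x
   (0-indexed) lies in {j m, ..., j m + m - 1}, i.e. x %/ m = j. *)
Definition block n r (m : nat) (i : 'I_r) (j : nat) : {set vertex n r} :=
  [set v : vertex n r | (v.2 == i) && (nat_of_ord v.1 %/ m == j)%N].

Definition P_independent (R : realType) n r (m : nat) (gamma : 'I_r -> R)
    (H : hgraph n r) (I : {set vertex n r}) : Prop :=
  balanced gamma I /\ independent H I /\
  (forall (i : 'I_r) (j : nat), (j < n %/ m)%N -> (#|I :&: block n m i j| <= 1)%N).

Definition Zk_pos (R : realType) n r (m k : nat) (gamma : 'I_r -> R) (H : hgraph n r) : Prop :=
  exists I : {set vertex n r}, P_independent m gamma H I /\ #|I| = k.

(* Probability of an event under H(r,n,p): each of the n^r possible edges is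
   present independently with probability p. *)
Definition hprob (R : realType) n r (p : R) (A : hgraph n r -> Prop) : R :=
  \sum_(H : hgraph n r | `[< A H >]) p ^+ #|H| * (1 - p) ^+ #|~: H|.

(* Main.v *)
Require Import Defs.
From HB Require Import structures.
From mathcomp Require Import all_boot all_order all_algebra.
From mathcomp Require Import boolp reals sequences exp.
From mathcomp Require Import ring lra.
Import Order.TTheory GRing.Theory Num.Theory.
Local Open Scope ring_scope.

Lemma weightE (R : realType) (T : finType) (p : R) (H : {set T}) :
  p ^+ #|H| * (1 - p) ^+ #|~: H| = \prod_(e : T) (if e \in H then p else 1 - p).
Proof.
rewrite (bigID (mem H)) /=.
rewrite -!prodr_const; congr (_ * _).
  by apply: eq_big => [e|e /= ->] //.
apply: eq_big => [e|e /= eH]; first by rewrite in_setC.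
by move: eH; rewrite in_setC => /negbTE ->.
Qed.

Lemma hprob_lb (R : realType) n r (p : R) (A : hgraph n r -> Prop) (S : {set edge n r}) :
  0 <= p <= 1 ->
  (forall H : hgraph n r, (forall e, e \in H -> e \notin S) -> A H) ->
  (1 - p) ^+ #|S| <= hprob p A.
Proof.
move=> /andP[p0 p1] hA.
pose F := fun (e : edge n r) (b : bool) => if b then (if e \in S then 0 else p) else 1 - p.
have E1 : \prod_(e : edge n r) \sum_(b : bool) F e b = (1 - p) ^+ #|S|.
  rewrite -prodr_const [RHS]big_mkcond /=; apply: eq_bigr => e _.
  rewrite big_bool /F; case: (e \in S) => /=; [by rewrite add0r | by rewrite addrCA subrr addr0].
rewrite -E1 bigA_distr_bigA /=.
rewrite (reindex (fun H : {set edge n r} => [ffun e => e \in H])) /=; last first.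
  exists (fun f : {ffun edge n r -> bool} => [set e | f e]) => [H _|f _].
    by apply/setP => e; rewrite inE ffunE.
  by apply/ffunP => e; rewrite ffunE inE.
rewrite /hprob [X in _ <= X]big_mkcond /=; apply: ler_sum => H _.
under eq_bigr do rewrite ffunE.
have [hd|hnd] := boolP [forall e, (e \in H) ==> (e \notin S)].
  have hAH : A H by apply: hA => e eH; move/forallP: hd => /(_ e); rewrite eH.
  have -> : `[< A H >] = true by apply/asboolP.
  rewrite weightE le_eqVlt; apply/orP; left; apply/eqP; apply: eq_bigr => e _.
  rewrite /F; case eH: (e \in H) => //.
  by move/forallP: hd => /(_ e); rewrite eH /= => /negbTE ->.
have [e /andP[eH eS]] : exists e, (e \in H) && (e \in S).
  move/forallPn: hnd => [e]; rewrite negb_imply negbK => h; by exists e.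
rewrite (bigD1 e) //= /F eH eS mul0r.
case: (`[< A H >]) => //; rewrite weightE; apply: prodr_ge0 => x _.
by case: (x \in H); rewrite ?subr_ge0.
Qed.

Local Open Scope nat_scope.
Lemma card_mult n m K : (0 < m)%N -> (K * m <= n)%N ->
  #|[set x : 'I_n | (m %| x) && (x < K * m)]| = K.
Proof.
move=> m0; elim: K => [|K IH] hK.
  apply/eqP; rewrite cards_eq0; apply/eqP/setP => x; by rewrite !inE mul0n ltn0 andbF.
have hKn : (K * m < n)%N by apply: leq_trans hK; rewrite mulSn addnC -addn1 leq_add2l.
pose o := Ordinal hKn.
have -> : [set x : 'I_n | (m %| x) && (x < K.+1 * m)] =
          o |: [set x : 'I_n | (m %| x) && (x < K * m)].
  apply/setP => x; rewrite !inE; apply/idP/idP.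
    move=> /andP[/dvdnP[q hx] hq]; rewrite -val_eqE /= hx dvdn_mull //=.
    move: hq; rewrite hx ltn_mul2r m0 /= ltnS leq_eqVlt => /orP[/eqP->|hq].
      by rewrite eqxx.
    by rewrite ltn_mul2r m0 hq orbT.
  move=> /orP[/eqP->|/andP[-> h]] /=.
    by rewrite dvdn_mull // ltn_mul2r m0 ltnS leqnn.
  by apply: leq_trans h _; rewrite leq_mul2r leqnSn orbT.
rewrite cardsU1 IH ?(ltnW hKn) //.
by rewrite !inE ltnn andbF.
Qed.

Definition Sof n r (I : {set vertex n r}) : {set edge n r} :=
  [set e : edge n r | [forall i, (e i, i) \in I]].
Arguments Sof {n r} I.

Lemma card_Sof n r (I : {set vertex n r}) : (0 < r)%N -> (#|Sof I| <= #|I| ^ r)%N.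
Proof.
move=> r0; pose X := [set v.1 | v in I].
apply: (@leq_trans #|ffun_on (mem X)|).
  apply: subset_leq_card; apply/subsetP => e; rewrite inE => /forallP he.
  apply/ffun_onP => i; apply/imsetP; exists (e i, i) => //.
rewrite card_ffun_on card_ord leq_exp2r //.
  by apply: leq_imset_card.
Qed.

Lemma construct n r m (kk : 'I_r -> nat) : (0 < m)%N -> (forall i, kk i * m <= n)%N ->
  exists I : {set vertex n r},
    #|I| = (\sum_i kk i)%N /\ (forall i, #|[set v in I | v.2 == i]| = kk i) /\
    (forall i j, #|I :&: block n m i j| <= 1)%N.
Proof.
move=> m0 hk.
pose I := [set v : vertex n r | (m %| v.1) && (v.1 < kk v.2 * m)].
have hI : forall i, #|[set v in I | v.2 == i]| = kk i.
  move=> i.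
  have -> : [set v in I | v.2 == i] =
      [set (x, i) | x in [set x : 'I_n | (m %| x) && (x < kk i * m)]].
    apply/setP => [[x j]]; rewrite !inE /=; apply/idP/idP.
      move=> /andP[/andP[h1 h2] /eqP ej]; subst j.
      by apply/imsetP; exists x => //; rewrite inE h1 h2.
    move=> /imsetP[y]; rewrite inE => /andP[h1 h2] [-> ->].
    by rewrite h1 h2 eqxx.
  rewrite card_imset ?card_mult //.
  by move=> x y [].
exists I; split; last split => //.
  rewrite -sum1_card (partition_big (fun v : vertex n r => v.2) predT) //=.
  apply: eq_bigr => i _; rewrite -(hI i) -sum1_card.
  by apply: eq_bigl => v; rewrite !inE.
move=> i j; apply/card_le1_eqP => [[x1 x2] [y1 y2]]; rewrite !inE /=.
move=> /andP[/andP[/dvdnP[q1 hx] _] /andP[/eqP ex /eqP ejx]].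
move=> /andP[/andP[/dvdnP[q2 hy] _] /andP[/eqP ey /eqP ejy]].
subst x2 y2; congr (_, _); apply: val_inj => /=.
by move: ejx ejy; rewrite hx hy !mulnK // => -> ->.
Qed.

Local Close Scope nat_scope.
Local Open Scope ring_scope.

Lemma ln_le_pow (R : realType) (d t : R) : 0 < d -> 0 < t -> ln d <= powR d t / t.
Proof.
move=> d0 t0.
have h1 : -1 < powR d t - 1 by have := powR_gt0 t d0; lra.
have := le_ln1Dx h1; rewrite addrC subrK ln_powR => h.
rewrite ler_pdivlMr //; rewrite mulrC; lra.
Qed.

Lemma exp_lb (R : realType) (p : R) : 0 <= p -> p <= 2^-1 -> expR (- (2 * p)) <= 1 - p.
Proof.
move=> p0 p1; rewrite expRN.
have e0 := expR_gt0 (2 * p).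
rewrite -[X in X <= _]mul1r ler_pdivrMr //; rewrite mulrC.
have := expR_ge1Dx (2 * p) => h.
have h2 : 1 <= (1 + 2 * p) * (1 - p) by nra.
apply: (le_trans h2); apply: ler_wpM2r; lra.
Qed.

Lemma analytic (R : realType) (r : nat) (c rho d : R) (n : nat) :
  (2 <= r)%N -> 0 < c -> 0 < rho -> rho < 1 -> 1 < d ->
  1 <= c * ln d ->
  powR (r%:R ^+ r * c ^+ 2 / (rho * (r.-1%:R)^-1 / 16) ^+ 2) (8 / (rho * (r.-1%:R)^-1)) <= d ->
  (0 < n)%N ->
  2 * (d / n%:R ^+ r.-1) * ((1 - rho) * r%:R * n%:R * powR (c * ln d / d) (r.-1%:R)^-1) ^+ r
   <= 50 * n%:R * Num.sqrt (r%:R * powR (c * ln d) (r.-1%:R)^-1) / powR d ((1 - rho / 4) / r.-1%:R).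
Proof.
move=> r2 c0 rho0 rho1 d1 cL1 hdM n0.
set s := (r.-1%:R)^-1; set L := ln d.
have r10 : (0 < r.-1)%N by rewrite -ltnS prednK // ltnW.
have r1R : (1 <= r.-1%:R :> R) by rewrite ler1n.
have s0 : 0 < s by rewrite invr_gt0; lra.
have s1 : s <= 1 by rewrite invf_le1 //; lra.
have rs1 : r.-1%:R * s = 1 by rewrite mulfV //; apply/eqP => h; lra.
have d0 : 0 < d by lra.
have L0 : 0 < L by apply: ln_gt0.
set A := powR (c * L) s.
have A1 : 1 <= A by rewrite /A -(powRr0 (c * L)); apply: ler_powR => //; lra.
have AcL : A <= c * L by apply: ler1_powR.
set Ds := powR d s.
have Ds0 : 0 < Ds by apply: powR_gt0.
set f := powR (c * L / d) s.
have f0 : 0 <= f by apply: powR_ge0.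
have hf : f = A / Ds.
  have hcL : 0 <= c * L / d by apply: divr_ge0; [apply: mulr_ge0 | ]; lra.
  have -> : A = f * Ds.
    rewrite /A /f /Ds -powRM //; last by lra.
    by rewrite divfK //; apply/eqP; lra.
  by rewrite mulfK //; apply/eqP; lra.
have hfr : f ^+ r = c * L / d * f.
  rewrite -(prednK (ltnW r2)) exprSr; congr (_ * _).
  rewrite /f -powR_mulrn ?powR_ge0 // -powRrM (mulrC s) rs1 powRr1 //.
  by apply: divr_ge0; [apply: mulr_ge0 | ]; lra.
have n0R : 0 < n%:R :> R by rewrite ltr0n.
have rr0 : 0 < r%:R ^+ r :> R by apply: exprn_gt0; rewrite ltr0n; apply: leq_trans r2.
have hrho : 0 <= 1 - rho by lra.
have hLHS : 2 * (d / n%:R ^+ r.-1) * ((1 - rho) * r%:R * n%:R * f) ^+ r =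
    (1 - rho) ^+ r * (2 * n%:R * r%:R ^+ r * c * L * f).
  rewrite !exprMn hfr -[in n%:R ^+ r](prednK (ltnW r2)) exprSr.
  field; apply/andP; split; apply/eqP; [lra | ].
  by apply/eqP; apply: expf_neq0; apply/eqP; lra.
rewrite hLHS; apply: (le_trans (ler_piMl _ _)).
    by rewrite hf; apply: mulr_ge0; [repeat apply: mulr_ge0 | apply: divr_ge0]; lra.
  by apply: exprn_ile1; lra.
have -> : powR d ((1 - rho / 4) / r.-1%:R) = Ds / powR d (rho * s / 4).
  rewrite /Ds -powRB; last by apply/implyP => _; apply/eqP; lra.
  by congr (powR d _); rewrite /s; field; apply/eqP; lra.
set t := rho * s / 16.
have t0 : 0 < t by rewrite /t; apply: divr_gt0; [apply: mulr_gt0|]; lra.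
set E := powR d t.
have E0 : 0 < E by apply: powR_gt0.
set E8 := powR d (rho * s / 8).
have hE8 : E8 = E ^+ 2.
  by rewrite /E8 /E -powR_mulrn ?powR_ge0 // -powRrM /t; congr (powR d _); field.
have hD4 : powR d (rho * s / 4) = E8 ^+ 2.
  by rewrite /E8 -powR_mulrn ?powR_ge0 // -powRrM; congr (powR d _); field.
rewrite hD4.
set M := r%:R ^+ r * c ^+ 2 / t ^+ 2.
have hM : M <= E8.
  have M0 : 0 <= M by apply: divr_ge0; [apply: mulr_ge0; [lra|apply: sqr_ge0]|apply: sqr_ge0].
  have := @ge0_ler_powR _ (rho * s / 8) _ (powR M (8 / (rho * s))) d.
  rewrite -powRrM.
  have -> : 8 / (rho * s) * (rho * s / 8) = 1.
    by field; apply/andP; split; apply/eqP; lra.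
  rewrite powRr1 //; apply.
  - by apply: divr_ge0; [apply: mulr_ge0|]; lra.
  - by rewrite nnegrE powR_ge0.
  - by rewrite nnegrE; lra.
  - exact: hdM.
have hL : L <= E / t by apply: ln_le_pow.
have hLL : L * L <= E8 / t ^+ 2.
  rewrite hE8 -expr_div_n expr2.
  by apply: ler_pM; lra.
have hsq : 1 <= Num.sqrt (r%:R * A).
  rewrite -[X in X <= _]sqrtr1 ler_sqrt; last by apply: mulr_ge0 => //; lra.
  have : 1 <= r%:R :> R by rewrite ler1n; apply: leq_trans r2.
  nra.
have hLA : L * A <= c * L * L by nra.
have h2 : r%:R ^+ r * c ^+ 2 * (L * L) <= M * E8.
  have -> : M * E8 = r%:R ^+ r * c ^+ 2 * (E8 / t ^+ 2) by rewrite /M; field; apply/eqP; lra.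
  apply: ler_wpM2l => //; apply: mulr_ge0; [lra|apply: sqr_ge0].
have h3 : r%:R ^+ r * c * (L * A) <= r%:R ^+ r * c * (c * L * L).
  apply: ler_wpM2l => //; apply: mulr_ge0; lra.
have key : 2 * r%:R ^+ r * c * L * A <= 50 * Num.sqrt (r%:R * A) * E8 ^+ 2.
  have E80 : 0 <= E8 by rewrite hE8 sqr_ge0.
  have h4 : M * E8 <= E8 * E8 by apply: ler_wpM2r.
  have h5 : E8 * E8 <= Num.sqrt (r%:R * A) * (E8 * E8).
    rewrite -[X in X <= _]mul1r; apply: ler_wpM2r => //; nra.
  rewrite expr2; nra.
rewrite hf.
have -> : 2 * n%:R * r%:R ^+ r * c * L * (A / Ds) = (n%:R / Ds) * (2 * r%:R ^+ r * c * L * A).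
  by field; apply/eqP; lra.
have -> : 50 * n%:R * Num.sqrt (r%:R * A) / (Ds / E8 ^+ 2) = (n%:R / Ds) * (50 * Num.sqrt (r%:R * A) * E8 ^+ 2).
  by field; rewrite hE8; apply/andP; split; apply/eqP; nra.
apply: ler_wpM2l => //; apply: divr_ge0; lra.
Qed.


Lemma powR_root (R : realType) (x : R) (k : nat) : 0 <= x -> (0 < k)%N -> powR (x ^+ k) (k%:R)^-1 = x.
Proof.
move=> x0 k0.
rewrite -(powR_mulrn k x0) -powRrM mulfV ?powRr1 //.
by rewrite pnatr_eq0 -lt0n.
Qed.

Lemma alg (R : fieldType) (c L d : R) k : L != 0 -> d != 0 -> c*L/d * (d / L^+k.+1) * L^+k = c.
Proof. move=> L0 d0. rewrite exprSr. field. by rewrite L0 d0 expf_neq0. Qed.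

Lemma km_le (R : realType) (r : nat) (c rho d : R) :
  (2 <= r)%N -> 0 < c -> 0 <= rho -> rho < 1 -> 1 < d ->
  r%:R * powR c (r.-1%:R)^-1 <= ln d ->
  powR (c * ln d / d) (r.-1%:R)^-1 * powR (d / (ln d) ^+ r) (r.-1%:R)^-1 * ((1 - rho) * r%:R) <= 1.
Proof.
move=> r2 c0 rho0 rho1 d1 hL.
set s := (r.-1%:R)^-1; set L := ln d.
have r10 : (0 < r.-1)%N by rewrite -ltnS prednK // ltnW.
have r1R : (1 <= r.-1%:R :> R) by rewrite ler1n.
have rs1 : r.-1%:R * s = 1 by rewrite mulfV //; apply/eqP => h; lra.
have d0 : 0 < d by lra.
have L0 : 0 < L by apply: ln_gt0.
have Lp : L = powR (L ^+ r.-1) s.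
  have L0' : 0 <= L by lra.
  by rewrite (@powR_root _ _ _ L0' r10).
have e0 : c * L / d * (d / L ^+ r) * L ^+ r.-1 = c.
  have := @alg R c L d r.-1; rewrite (prednK (ltnW r2)).
  by apply; apply/eqP; lra.
have g1 : 0 <= c * L / d by apply: divr_ge0; [apply: mulr_ge0|]; lra.
have g2 : 0 <= d / L ^+ r by apply: divr_ge0; [lra| apply: exprn_ge0; lra].
have g3 : 0 <= L ^+ r.-1 by apply: exprn_ge0; lra.
have e1 : powR (c * L / d) s * powR (d / L ^+ r) s * powR (L ^+ r.-1) s = powR c s.
  transitivity (powR (c * L / d * (d / L ^+ r) * L ^+ r.-1) s); last by rewrite e0.
  by rewrite (powRM _ _ g3) ?(powRM _ g1 g2) //; apply: mulr_ge0.
have hfm : powR (c * L / d) s * powR (d / L ^+ r) s = powR c s / L.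
  by rewrite -e1 -Lp mulfK //; apply/eqP; lra.
rewrite hfm.
have cs0 : 0 <= powR c s by apply: powR_ge0.
rewrite mulrC mulrA ler_pdivrMr // mul1r; apply: le_trans hL.
apply: ler_wpM2r => //; apply: ler_piMl; [by rewrite ler0n | lra].
Qed.

Theorem mainTheorem17 (R : realType) (r : nat) (gamma : 'I_r -> R) :
  (2 <= r)%N ->
  (forall i, 0 < gamma i < 1) ->
  \sum_(i < r) gamma i = 1 ->
  let c := (r%:R ^+ r.-1 * r.-1%:R * \prod_(i < r) gamma i)^-1 in
  exists rho0 : R, 0 < rho0 /\
  forall rho : R, 0 < rho -> rho < rho0 ->
  exists d0 : R, forall d : R, d0 <= d ->
  let f := powR (c * ln d / d) (r.-1%:R)^-1 in
  exists n0 : nat, forall n m k : nat, (n0 <= n)%N ->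
    (0 < m)%N -> (m %| n)%N ->
    m%:R = powR (d / (ln d) ^+ r) (r.-1%:R)^-1 ->
    k%:R = (1 - rho) * r%:R * n%:R * f ->
    (forall i, exists ki : nat, gamma i * k%:R = ki%:R) ->
    hprob (d / n%:R ^+ r.-1) (fun H : hgraph n r => Zk_pos m k gamma H) >=
      expR (- (50 * n%:R * Num.sqrt (r%:R * powR (c * ln d) (r.-1%:R)^-1))
              / powR d ((1 - rho / 4) / r.-1%:R)).
Proof.
move=> r2 hg hs c.
have r0 : (0 < r)%N by apply: ltnW.
have r10 : (0 < r.-1)%N by rewrite -ltnS prednK.
have c0 : 0 < c.
  rewrite /c invr_gt0; apply: mulr_gt0; first apply: mulr_gt0.
  - by apply: exprn_gt0; rewrite ltr0n.
  - by rewrite ltr0n.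
  - by apply: prodr_gt0 => i _; have /andP[] := hg i.
exists 1; split; first exact: ltr01.
move=> rho rho0 rho1.
set s := (r.-1%:R)^-1.
set t := rho * s / 16.
set M := r%:R ^+ r * c ^+ 2 / t ^+ 2.
exists (1 + expR (r%:R * powR c s) + expR (c^-1) + powR M (8 / (rho * s))).
move=> d hd f.
have e1 := expR_gt0 (r%:R * powR c s).
have e2 := expR_gt0 (c^-1).
have e3 := powR_ge0 M (8 / (rho * s)).
have d1 : 1 < d by lra.
have d0 : 0 < d by lra.
have hlnd : forall X, expR X <= d -> X <= ln d.
  by move=> X hX; rewrite -ler_expR lnK // posrE.
have hL : r%:R * powR c s <= ln d by apply: hlnd; lra.
have hcL : 1 <= c * ln d.
  have h : c^-1 <= ln d by apply: hlnd; lra.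
  by have := ler_wpM2l (ltW c0) h; rewrite mulfV ?gt_eqF.
have hdM : powR M (8 / (rho * s)) <= d by lra.
exists (Num.trunc (2 * d)).+1%N.
move=> n m k hn m0 mn hm hk hkk.
have n0 : (0 < n)%N by apply: leq_trans hn.
have n0R : 0 < n%:R :> R by rewrite ltr0n.
have hnd : 2 * d < n%:R.
  apply: lt_le_trans (truncnS_gt _) _; by rewrite ler_nat.
have hnn : n%:R <= n%:R ^+ r.-1 :> R.
  by rewrite -natrX ler_nat -{1}(expn1 n) leq_pexp2l.
set p := d / n%:R ^+ r.-1.
have pn0 : 0 < n%:R ^+ r.-1 :> R by apply: exprn_gt0.
have p0 : 0 <= p by apply: divr_ge0; lra.
have p12 : p <= 2^-1.
  rewrite /p ler_pdivrMr // ler_pdivlMl //; lra.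
pose kk := fun i => Num.trunc (gamma i * k%:R).
have hkkE : forall i, (kk i)%:R = gamma i * k%:R.
  by move=> i; rewrite /kk; have [ki ->] := hkk i; rewrite natrK.
have hsum : (\sum_i kk i)%N = k.
  apply/eqP; rewrite -(eqr_nat R) natr_sum.
  under eq_bigr do rewrite hkkE.
  by rewrite -mulr_suml hs mul1r.
have hkm : (k * m <= n)%N.
  rewrite -(ler_nat R) natrM hk hm /f.
  have h := @km_le R r c rho d r2 c0 (ltW rho0) rho1 d1 hL.
  have -> : (1 - rho) * r%:R * n%:R * powR (c * ln d / d) s * powR (d / ln d ^+ r) s
      = n%:R * (powR (c * ln d / d) s * powR (d / ln d ^+ r) s * ((1 - rho) * r%:R)) by ring.
  by apply: ler_piMr => //; apply: ltW.
have hkk_le : forall i, (kk i * m <= n)%N.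
  move=> i; apply: leq_trans hkm; rewrite leq_mul2r; apply/orP; right.
  rewrite -(ler_nat R) hkkE; apply: ler_piMl; first by rewrite ler0n.
  by have /andP[_ /ltW] := hg i.
have [I [hI [hIi hblk]]] := @construct n r m kk m0 hkk_le.
rewrite hsum in hI.
apply: le_trans (@hprob_lb R n r p _ (Sof I) _ _); last first.
- move=> H hdisj; exists I; split => //; split; last split.
  + by move=> i; rewrite hIi hI hkkE.
  + move=> e eH hall; have := hdisj e eH; rewrite inE negb_forall => /existsP[i].
    by rewrite hall.
  + by move=> i j _; apply: hblk.
- by rewrite p0 /=; lra.
have hS : (#|Sof I| <= k ^ r)%N by rewrite -hI; apply: card_Sof.
have p1 : 0 <= 1 - p by lra.
have p2 : 1 - p <= 1 by lra.
apply: le_trans (ler_wiXn2l p1 p2 hS).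
have hexp : expR (- (2 * p)) <= 1 - p by apply: exp_lb.
have ex0 : 0 <= expR (- (2 * p)) by apply/ltW/expR_gt0.
apply: le_trans (lerXn2r _ _ _ hexp); rewrite ?nnegrE //.
rewrite -expRM_natr ler_expR natrX.
have ha := @analytic R r c rho d n r2 c0 rho0 rho1 d1 hcL hdM n0.
rewrite -/s -hk -/p in ha.
rewrite !mulNr lerN2.
exact: ha.
Qed.
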